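(* For positive real numbers $u_1,u_2,u_3,w_1,w_2,w_3$ define $$\mathsf K(u,w)=\frac{(u_1+w_1)(u_2+w_2)(u_3+w_3)+\max\{u_1u_2u_3,\,w_1w_2w_3\}}{\sqrt{(u_2u_3+w_2w_3+u_2w_3)(u_3u_1+w_3w_1+u_3w_1)(u_1u_2+w_1w_2+u_1w_2)}}.$$ Then $\mathsf K(u,w)\ge\sqrt3$ for all such arguments, with equality when $u_1=w_1$, $u_2=w_2$, $u_3=w_3$; moreover $\mathsf K$ is unbounded above on this domain.
   Context: Equivalently, with $\rho_i=u_i/w_i>0$, $\mathsf K^2=\dfrac{\big[(1+\rho_1)(1+\rho_2)(1+\rho_3)+\max\{1,\rho_1\rho_2\rho_3\}\big]^2}{(1+\rho_2\rho_3+\rho_2)(1+\rho_3\rho_1+\rho_3)(1+\rho_1\rho_2+\rho_1)}$ and the claim is $\mathsf K^2\ge3$. *)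

(* Defs.v *)
From Stdlib Require Import Reals.
Open Scope R_scope.

Definition Kfun (u1 u2 u3 w1 w2 w3 : R) : R :=
  ((u1 + w1) * (u2 + w2) * (u3 + w3) + Rmax (u1 * u2 * u3) (w1 * w2 * w3))
  / sqrt ((u2 * u3 + w2 * w3 + u2 * w3)
          * (u3 * u1 + w3 * w1 + u3 * w1)
          * (u1 * u2 + w1 * w2 + u1 * w2)).

(* Main.v *)
Require Import Defs.
From Stdlib Require Import Reals Lra Psatz.
Open Scope R_scope.
Lemma aux x y z : 0 <= x -> x <= y -> y <= z ->
  0 <= (z-x)*((y-x)^2 + x*(z-x)) /\ 0 <= (y-x)*(z-y)*(z-x).
Proof. intros. split; repeat apply Rmult_le_pos; nra. Qed.
Lemma Epos a b c : 0 <= a -> 0 <= b -> 0 <= c ->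
  0 <= b*(a-c)^2 + c*(b-a)^2 + a*(c-b)^2 - (a-b)*(b-c)*(c-a).
Proof.
intros Ha Hb Hc.
destruct (Rle_dec a b); destruct (Rle_dec b c); destruct (Rle_dec a c).
all: first
 [ pose proof (aux a b c ltac:(lra) ltac:(lra) ltac:(lra))
 | pose proof (aux a c b ltac:(lra) ltac:(lra) ltac:(lra))
 | pose proof (aux b a c ltac:(lra) ltac:(lra) ltac:(lra))
 | pose proof (aux b c a ltac:(lra) ltac:(lra) ltac:(lra))
 | pose proof (aux c a b ltac:(lra) ltac:(lra) ltac:(lra))
 | pose proof (aux c b a ltac:(lra) ltac:(lra) ltac:(lra)) ].
all: pose proof (Rmult_le_pos a ((c-b)^2) Ha (pow2_ge_0 _));
     pose proof (Rmult_le_pos b ((a-c)^2) Hb (pow2_ge_0 _));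
     pose proof (Rmult_le_pos c ((b-a)^2) Hc (pow2_ge_0 _)); lra.
Qed.
Lemma key a b c : 0 < a -> 0 < b -> 0 < c ->
  3*((1+b*c+b)*(1+c*a+c)*(1+a*b+a)) <= ((1+a)*(1+b)*(1+c) + Rmax (a*b*c) 1)^2.
Proof.
intros Ha Hb Hc.
pose proof (Epos a b c ltac:(lra) ltac:(lra) ltac:(lra)) as HE.
pose proof (pow2_ge_0 ((a-c)*(1-b))).
pose proof (pow2_ge_0 ((b-a)*(1-c))).
pose proof (pow2_ge_0 ((c-b)*(1-a))).
assert (Ht : 0 < a*b*c) by (apply Rmult_lt_0_compat; [apply Rmult_lt_0_compat|]; lra).
assert (HP : 0 < (1+a)*(1+b)*(1+c)) by (apply Rmult_lt_0_compat; [apply Rmult_lt_0_compat|]; lra).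
unfold Rmax; destruct (Rle_dec (a*b*c) 1).
- assert (0 <= (1 - a*b*c)*((1+a)*(1+b)*(1+c) + a*b*c)) by (apply Rmult_le_pos; lra).
  lra.
- assert (0 <= (a*b*c - 1)*((1+a)*(1+b)*(1+c) + 1)) by (apply Rmult_le_pos; lra).
  lra.
Qed.

Lemma part1 u1 u2 u3 w1 w2 w3 :
  0 < u1 -> 0 < u2 -> 0 < u3 -> 0 < w1 -> 0 < w2 -> 0 < w3 ->
  sqrt 3 <= Kfun u1 u2 u3 w1 w2 w3.
Proof.
intros H1 H2 H3 H4 H5 H6.
set (a := u1/w1). set (b := u2/w2). set (c := u3/w3).
assert (Ea : u1 = a*w1) by (unfold a; field; lra).
assert (Eb : u2 = b*w2) by (unfold b; field; lra).
assert (Ec : u3 = c*w3) by (unfold c; field; lra).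
assert (Ha : 0 < a) by (unfold a; apply Rdiv_lt_0_compat; lra).
assert (Hb : 0 < b) by (unfold b; apply Rdiv_lt_0_compat; lra).
assert (Hc : 0 < c) by (unfold c; apply Rdiv_lt_0_compat; lra).
clearbody a b c. subst u1 u2 u3.
set (W := w1*w2*w3).
assert (HW : 0 < W) by (unfold W; repeat apply Rmult_lt_0_compat; lra).
set (P := (1+a)*(1+b)*(1+c)).
set (N := P + Rmax (a*b*c) 1).
set (D := (1+b*c+b)*(1+c*a+c)*(1+a*b+a)).
assert (HD : 0 < D) by (unfold D; repeat apply Rmult_lt_0_compat; nra).
assert (HN : 0 < N).
{ unfold N, P. pose proof (Rmax_r (a*b*c) 1).
  assert (0 < (1+a)*(1+b)*(1+c)) by (repeat apply Rmult_lt_0_compat; lra). lra. }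
assert (Hmax : Rmax (a*w1*(b*w2)*(c*w3)) (w1*w2*w3) = W * Rmax (a*b*c) 1).
{ replace (a*w1*(b*w2)*(c*w3)) with ((a*b*c)*W) by (unfold W; ring).
  fold W. unfold Rmax. destruct (Rle_dec (a*b*c*W) W);
  destruct (Rle_dec (a*b*c) 1); try ring; exfalso.
  - apply n. apply (Rmult_le_reg_r W); [lra|]. lra.
  - apply n. nra. }
unfold Kfun. rewrite Hmax.
replace ((a*w1 + w1) * (b*w2 + w2) * (c*w3 + w3) + W * Rmax (a*b*c) 1) with (W*N)
  by (unfold N, P, W; ring).
replace ((b * w2 * (c * w3) + w2 * w3 + b * w2 * w3) *
     (c * w3 * (a * w1) + w3 * w1 + c * w3 * w1) *
     (a * w1 * (b * w2) + w1 * w2 + a * w1 * w2)) with (W^2 * D) by (unfold D, W; ring).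
rewrite sqrt_mult_alt by (apply pow2_ge_0).
rewrite sqrt_pow2 by lra.
replace (W*N/(W*sqrt D)) with (N / sqrt D) by (field; split; [apply Rgt_not_eq, sqrt_lt_R0|]; lra).
assert (HsD : 0 < sqrt D) by (apply sqrt_lt_R0; lra).
apply (Rmult_le_reg_r (sqrt D)); [lra|].
unfold Rdiv. rewrite Rmult_assoc, Rinv_l, Rmult_1_r by lra.
rewrite <- sqrt_mult_alt by lra.
rewrite <- (sqrt_pow2 N) by lra.
apply sqrt_le_1_alt.
apply key; lra.
Qed.

Lemma part2 u1 u2 u3 : 0 < u1 -> 0 < u2 -> 0 < u3 ->
  Kfun u1 u2 u3 u1 u2 u3 = sqrt 3.
Proof.
intros H1 H2 H3. unfold Kfun. rewrite Rmax_left by lra.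
set (U := u1*u2*u3).
assert (HU : 0 < U) by (unfold U; repeat apply Rmult_lt_0_compat; lra).
replace ((u2 * u3 + u2 * u3 + u2 * u3) * (u3 * u1 + u3 * u1 + u3 * u1) *
      (u1 * u2 + u1 * u2 + u1 * u2)) with (3 * (3*U)^2) by (unfold U; ring).
rewrite sqrt_mult_alt by lra. rewrite sqrt_pow2 by lra.
replace ((u1 + u1) * (u2 + u2) * (u3 + u3) + U) with (9*U) by (unfold U; ring).
assert (Hs : sqrt 3 * sqrt 3 = 3) by (apply sqrt_sqrt; lra).
assert (Hs0 : 0 < sqrt 3) by (apply sqrt_lt_R0; lra).
replace (9*U) with (sqrt 3 * (sqrt 3 * (3*U))) by (rewrite <- Rmult_assoc, Hs; ring).
field. lra.
Qed.

Lemma part3 (M : R) : exists u1 u2 u3 w1 w2 w3 : R,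
      0 < u1 /\ 0 < u2 /\ 0 < u3 /\ 0 < w1 /\ 0 < w2 /\ 0 < w3 /\
      M < Kfun u1 u2 u3 w1 w2 w3.
Proof.
set (y := 6 * (Rabs M + 1)).
assert (Hy : 6 <= y) by (unfold y; pose proof (Rabs_pos M); lra).
assert (HMy : M < y/6) by (unfold y; pose proof (Rle_abs M); lra).
exists (y^2), 1, (y^2), 1, (y^4), 1.
assert (Hy2 : 0 < y^2) by (apply pow_lt; lra).
assert (Hy4 : 0 < y^4) by (apply pow_lt; lra).
repeat split; try lra.
unfold Kfun.
set (N := (y ^ 2 + 1) * (1 + y ^ 4) * (y ^ 2 + 1) + Rmax (y ^ 2 * 1 * y ^ 2) (1 * y ^ 4 * 1)).
set (D := (1 * y ^ 2 + y ^ 4 * 1 + 1 * 1) * (y ^ 2 * y ^ 2 + 1 * 1 + y ^ 2 * 1) *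
     (y ^ 2 * 1 + 1 * y ^ 4 + y ^ 2 * y ^ 4)).
assert (HN : y^8 <= N).
{ unfold N. pose proof (Rmax_r (y ^ 2 * 1 * y ^ 2) (1 * y ^ 4 * 1)).
  assert (y^8 <= (y ^ 2 + 1) * (1 + y ^ 4) * (y ^ 2 + 1)).
  { replace (y^8) with (y^2*y^4*y^2) by ring.
    apply Rmult_le_compat; try nra; apply Rmult_le_compat; nra. }
  assert (0 <= 1*y^4*1) by nra. lra. }
assert (HD0 : 0 < D) by (unfold D; repeat apply Rmult_lt_0_compat; nra).
assert (HDb : D <= (6*y^7)^2).
{ assert (Hq : 1 + y^2 + y^4 <= 3*y^4).
  { assert (1 <= y^2) by nra. assert (y^2 <= y^4) by nra. lra. }
  replace D with (y^2 * (1 + y^2 + y^4)^3) by (unfold D; ring).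
  replace ((6*y^7)^2) with (y^2 * (36*y^12)) by ring.
  apply Rmult_le_compat_l; [lra|].
  assert (0 <= 1 + y^2 + y^4) by nra.
  assert ((1 + y^2 + y^4)^3 <= (3*y^4)^3).
  { apply pow_incr. lra. }
  assert (0 < y^12) by (apply pow_lt; lra).
  replace ((3*y^4)^3) with (27*y^12) in H0 by ring. lra. }
assert (Hs : sqrt D <= 6*y^7).
{ rewrite <- (sqrt_pow2 (6*y^7)) by (pose proof (pow_lt y 7); lra).
  apply sqrt_le_1_alt. exact HDb. }
assert (HsD : 0 < sqrt D) by (apply sqrt_lt_R0; lra).
assert (Hy7 : 0 < y^7) by (apply pow_lt; lra).
apply (Rlt_le_trans _ (y/6)); [exact HMy|].
apply (Rmult_le_reg_r (sqrt D)); [lra|].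
unfold Rdiv at 2. rewrite Rmult_assoc, Rinv_l, Rmult_1_r by lra.
apply (Rle_trans _ (y/6 * (6*y^7))).
- apply Rmult_le_compat_l; [lra|exact Hs].
- replace (y/6 * (6*y^7)) with (y^8) by (field). exact HN.
Qed.

Theorem mainTheorem5 :
  (forall u1 u2 u3 w1 w2 w3 : R,
      0 < u1 -> 0 < u2 -> 0 < u3 -> 0 < w1 -> 0 < w2 -> 0 < w3 ->
      sqrt 3 <= Kfun u1 u2 u3 w1 w2 w3)
  /\ (forall u1 u2 u3 : R,
      0 < u1 -> 0 < u2 -> 0 < u3 ->
      Kfun u1 u2 u3 u1 u2 u3 = sqrt 3)
  /\ (forall M : R, exists u1 u2 u3 w1 w2 w3 : R,
      0 < u1 /\ 0 < u2 /\ 0 < u3 /\ 0 < w1 /\ 0 < w2 /\ 0 < w3 /\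
      M < Kfun u1 u2 u3 w1 w2 w3).
Proof.
split; [exact part1|split; [exact part2|exact part3]].
Qed.
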